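(* Suppose there exist constants $\epsilon,\kappa>0$ such that for all $\bm Z$ with $\mathrm{dist}(\bm Z,\mathcal W_G)\le\epsilon$ we have $\mathrm{dist}(\bm Z,\mathcal W_G)\le\kappa\|\nabla G(\bm Z)\|_F$. Then for all $\bm W$ with $\mathrm{dist}(\bm W,\mathcal W_F)\le\epsilon/\sqrt{\lambda_{\max}}$, $$\mathrm{dist}(\bm W,\mathcal W_F)\le\frac{\kappa\lambda}{\lambda_{\min}}\|\nabla F(\bm W)\|_F.$$
   Context: Let $L\ge2$, $d_0,\dots,d_L$ positive integers, $\bm Y\in\mathbb R^{d_L\times d_0}$, $\lambda_1,\dots,\lambda_L>0$, $\lambda=\prod_l\lambda_l$, $\lambda_{\min}=\min_l\lambda_l$, $\lambda_{\max}=\max_l\lambda_l$. For $\bm W=(\bm W_1,\dots,\bm W_L)$ with $\bm W_l\in\mathbb R^{d_l\times d_{l-1}}$: $F(\bm W)=\|\bm W_L\cdots\bm W_1-\bm Y\|_F^2+\sum_l\lambda_l\|\bm W_l\|_F^2$ and $G(\bm W)=\|\bm W_L\cdots\bm W_1-\sqrt\lambda\bm Y\|_F^2+\lambda\sum_l\|\bm W_l\|_F^2$; $\mathcal W_F$, $\mathcal W_G$ are the sets of critical points (zero gradient) of $F$, $G$. Distances and gradient norms use the Frobenius norm on tuples: $\mathrm{dist}(\bm W,\mathcal S)=\inf_{\bm V\in\mathcal S}(\sum_l\|\bm W_l-\bm V_l\|_F^2)^{1/2}$. *)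

(* Defs.v *)
From HB Require Import structures.
From mathcomp Require Import all_boot all_order all_algebra.
From mathcomp Require Import all_classical all_reals.
Set Implicit Arguments. Unset Strict Implicit. Unset Printing Implicit Defensive.
Import Order.TTheory GRing.Theory Num.Theory.
Local Open Scope ring_scope.
Local Open Scope classical_set_scope.

Section DeepLinear.
Variables (R : realType) (L : nat) (d : nat -> nat).

(* A tuple W = (W_1,...,W_L): the paper's W_{l+1} is [W l] : 'M_(d (l+1), d l),
   for l < L.  Components with index l >= L are irrelevant junk: they are
   ignored by every quantity below (norms, inner products, F, G). *)
Definition tup := forall l : nat, 'M[R]_(d l.+1, d l).

Definition tadd (W H : tup) : tup := fun l => W l + H l.
Definition tsub (W H : tup) : tup := fun l => W l - H l.
Definition tzero : tup := fun l => 0.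

Definition frob2 m n (A : 'M[R]_(m, n)) : R := \sum_i \sum_j (A i j) ^+ 2.

Definition tinner (W H : tup) : R :=
  \sum_(l < L) \sum_i \sum_j (W l i j * H l i j).
Definition tnorm (W : tup) : R := Num.sqrt (\sum_(l < L) frob2 (W l)).

Fixpoint prodW (W : tup) (k : nat) : 'M[R]_(d k, d 0) :=
  match k with
  | 0 => 1%:M
  | k'.+1 => W k' *m prodW W k'
  end.

Definition is_grad (f : tup -> R) (W g : tup) : Prop :=
  forall e : R, 0 < e -> exists2 delta : R, 0 < delta &
    forall H : tup, tnorm H < delta ->
      `|f (tadd W H) - f W - tinner g H| <= e * tnorm H.

Definition crit (f : tup -> R) : set tup := [set W | is_grad f W tzero].

Definition tdist (W : tup) (S : set tup) : R :=
  inf [set tnorm (tsub W V) | V in S].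

Variables (Y : 'M[R]_(d L, d 0)) (lam : nat -> R).
(* lam l is the paper's lambda_{l+1} *)
Definition lamP : R := \prod_(l < L) lam l.
Definition lam_min : R := \big[Order.min/lam 0%N]_(l < L) lam l.
Definition lam_max : R := \big[Order.max/lam 0%N]_(l < L) lam l.

Definition Fobj (W : tup) : R :=
  frob2 (prodW W L - Y) + \sum_(l < L) lam l * frob2 (W l).
Definition Gobj (W : tup) : R :=
  frob2 (prodW W L - Num.sqrt lamP *: Y) + lamP * \sum_(l < L) frob2 (W l).

End DeepLinear.

(* Main.v *)
Require Import Defs.
From HB Require Import structures.
From mathcomp Require Import all_boot all_order all_algebra.
From mathcomp Require Import all_classical all_reals.
From mathcomp Require Import ring lra.
Import Order.TTheory GRing.Theory Num.Theory.
Set Implicit Arguments. Unset Strict Implicit.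
Local Open Scope ring_scope.
Local Open Scope classical_set_scope.

Section Aux.
Variables (R : realType) (L : nat) (d : nat -> nat).

Definition sc (b : nat -> R) (W : tup R d) : tup R d := fun l => b l *: W l.

Lemma tup_ext (W V : tup R d) : (forall l, W l = V l) -> W = V.
Proof. by move=> h; apply: boolp.functional_extensionality_dep. Qed.

Lemma frob2Z m n c (A : 'M[R]_(m, n)) : frob2 (c *: A) = c ^+ 2 * frob2 A.
Proof.
rewrite /frob2 mulr_sumr; apply: eq_bigr => i _; rewrite mulr_sumr.
by apply: eq_bigr => j _; rewrite mxE exprMn.
Qed.

Lemma frob2_ge0 m n (A : 'M[R]_(m, n)) : 0 <= frob2 A.
Proof. by apply: sumr_ge0 => i _; apply: sumr_ge0 => j _; apply: sqr_ge0. Qed.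

Lemma tnorm_ge0 (W : tup R d) : 0 <= tnorm L W.
Proof. exact: sqrtr_ge0. Qed.

Lemma tnorm_sc_le b M X : 0 <= M ->
  (forall l, (l < L)%N -> b l ^+ 2 <= M ^+ 2) ->
  tnorm L (sc b X) <= M * tnorm L X.
Proof.
move=> M0 hb; rewrite /tnorm -[M in M * _](ger0_norm M0) -sqrtr_sqr -sqrtrM ?sqr_ge0 //.
rewrite ler_sqrt; last by apply: mulr_ge0; [exact: sqr_ge0| apply: sumr_ge0 => l _; exact: frob2_ge0].
rewrite mulr_sumr; apply: ler_sum => l _; rewrite /sc frob2Z.
by apply: ler_wpM2r; [exact: frob2_ge0 | apply: hb].
Qed.

Lemma tsub_sc b W V : tsub (sc b W) (sc b V) = sc b (tsub W V).
Proof. by apply: tup_ext => l; rewrite /tsub /sc scalerBr. Qed.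

Lemma grad_sc (f h : tup R d -> R) (b : nat -> R) (c Mi : R) x g :
  (forall l, b l != 0) -> 0 < c -> 0 < Mi ->
  (forall l, (l < L)%N -> (b l)^-1 ^+ 2 <= Mi ^+ 2) ->
  (forall y, f (sc b y) = c * h y) ->
  is_grad L h x g -> is_grad L f (sc b x) (sc (fun l => c * (b l)^-1) g).
Proof.
move=> hb c0 Mi0 hM hf hg e e0.
have [del del0 hdel] := hg (e / (c * Mi)) (divr_gt0 e0 (mulr_gt0 c0 Mi0)).
exists (del / Mi); first exact: divr_gt0.
move=> H hH.
set K := sc (fun l => (b l)^-1) H.
have eK : tadd (sc b x) H = sc b (tadd x K).
  by apply: tup_ext => l; rewrite /sc /tadd /K scalerDr scalerA mulfV // scale1r.
have nK : tnorm L K <= Mi * tnorm L H by apply: tnorm_sc_le; [exact: ltW|].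
have iK : tinner L (sc (fun l => c * (b l)^-1) g) H = c * tinner L g K.
  rewrite /tinner mulr_sumr; apply: eq_bigr => l _; rewrite mulr_sumr.
  apply: eq_bigr => i _; rewrite mulr_sumr; apply: eq_bigr => j _.
  rewrite /sc !mxE; ring.
rewrite eK !hf iK -!mulrBr normrM gtr0_norm //.
have hK : tnorm L K < del.
  apply: (le_lt_trans nK); rewrite mulrC -ltr_pdivlMr //.
have := hdel K hK => h1.
apply: le_trans (ler_wpM2l (ltW c0) h1) _.
have -> : c * (e / (c * Mi) * tnorm L K) = e / Mi * tnorm L K.
  by field; apply/andP; split; apply: lt0r_neq0.
apply: le_trans (ler_wpM2l _ nK) _; first by apply: divr_ge0; apply: ltW.
by rewrite mulrA divfK ?lt0r_neq0.
Qed.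

Lemma dist_sc (S1 S2 : set (tup R d)) b M W :
  0 < M -> (forall l, (l < L)%N -> b l ^+ 2 <= M ^+ 2) ->
  (forall V, S1 V -> S2 (sc b V)) -> (forall U, S2 U -> exists V, S1 V) ->
  tdist L (sc b W) S2 <= M * tdist L W S1.
Proof.
move=> M0 hb h12 h21.
case: (boolp.pselect (exists V, S1 V)) => [[V0 hV0]|hn].
  rewrite -ler_pdivrMl //; apply: lb_le_inf.
    by exists (tnorm L (tsub W V0)); exists V0.
  move=> y [V hV <-]; rewrite ler_pdivrMl //.
  apply: (le_trans _ (@tnorm_sc_le b M (tsub W V) (ltW M0) hb)); rewrite -tsub_sc.
  apply: ge_inf; last by exists (sc b V); [apply: h12|].
  by exists 0 => z [U _ <-]; apply: tnorm_ge0.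
have e1 : [set tnorm L (tsub W V) | V in S1] = set0.
  by apply/seteqP; split => z // [V hV _]; apply: hn; exists V.
have e2 : [set tnorm L (tsub (sc b W) V) | V in S2] = set0.
  by apply/seteqP; split => z // [V hV _]; apply: hn; apply: h21 hV.
by rewrite /tdist e1 e2 inf0 mulr0.
Qed.

Lemma prodW_sc b W k : prodW (sc b W) k = (\prod_(l < k) b l) *: prodW W k.
Proof.
elim: k => [|k IH] /=; first by rewrite big_ord0 scale1r.
rewrite IH big_ord_recr /= /sc -scalemxAl -scalemxAr scalerA; congr (_ *: _); exact: mulrC.
Qed.

Lemma prod_sqrt n (f : nat -> R) : (forall i, (i < n)%N -> 0 <= f i) ->
  \prod_(i < n) Num.sqrt (f i) = Num.sqrt (\prod_(i < n) f i).
Proof.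
elim: n => [|n IH] hf; first by rewrite !big_ord0 sqrtr1.
rewrite !big_ord_recr /= IH ?sqrtrM //; last by move=> i hi; apply: hf; apply: ltnW.
by apply: prodr_ge0 => i _; apply: hf; apply: (ltn_trans (ltn_ord i)).
Qed.

End Aux.
Theorem lemma3p1 (R : realType) (L : nat) (d : nat -> nat)
  (Y : 'M[R]_(d L, d 0%N)) (lam : nat -> R) :
  (2 <= L)%N ->
  (forall l, (l <= L)%N -> (0 < d l)%N) ->
  (forall l, (l < L)%N -> 0 < lam l) ->
  forall eps kappa : R, 0 < eps -> 0 < kappa ->
  (forall Z : tup R d,
     tdist L Z (crit L (Gobj Y lam)) <= eps ->
     forall g : tup R d, is_grad L (Gobj Y lam) Z g ->
       tdist L Z (crit L (Gobj Y lam)) <= kappa * tnorm L g) ->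
  forall W : tup R d,
    tdist L W (crit L (Fobj Y lam)) <= eps / Num.sqrt (lam_max L lam) ->
    forall g : tup R d, is_grad L (Fobj Y lam) W g ->
      tdist L W (crit L (Fobj Y lam))
        <= kappa * lamP L lam / lam_min L lam * tnorm L g.
Proof.
move=> L2 _ lampos eps kappa eps0 kap0 hG W hW g hg.
have L0 : (0 < L)%N by apply: leq_trans L2.
set lmin := lam_min L lam; set lmax := lam_max L lam; set lP := lamP L lam.
have minle : forall l, (l < L)%N -> lmin <= lam l.
  by move=> l hl; exact: (bigmin_le _ (Ordinal hl) (fun l : 'I_L => lam l)).
have lemax : forall l, (l < L)%N -> lam l <= lmax.
  by move=> l hl; exact: (le_bigmax _ (fun l : 'I_L => lam l) (Ordinal hl)).
have lmin0 : 0 < lmin.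
  by apply: lt_bigmin => [|i _]; apply: lampos.
have lmax0 : 0 < lmax by apply: lt_le_trans (lemax 0%N L0); apply: lampos.
have lP0 : 0 < lP by apply: prodr_gt0 => i _; apply: lampos.
set smin := Num.sqrt lmin; set smax := Num.sqrt lmax.
have smin0 : 0 < smin by rewrite sqrtr_gt0.
have smax0 : 0 < smax by rewrite sqrtr_gt0.
pose a := fun l => if (l < L)%N then Num.sqrt (lam l) else 1.
pose ai := fun l => (a l)^-1.
have a0 : forall l, 0 < a l.
  by move=> l; rewrite /a; case: ifP => hl //; rewrite sqrtr_gt0 lampos.
have an0 : forall l, a l != 0 by move=> l; apply: lt0r_neq0.
have ain0 : forall l, ai l != 0 by move=> l; rewrite invr_eq0.
have a2 : forall l, (l < L)%N -> a l ^+ 2 = lam l.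
  by move=> l hl; rewrite /a hl sqr_sqrtr // ltW // lampos.
have abnd : forall l, (l < L)%N -> a l ^+ 2 <= smax ^+ 2.
  by move=> l hl; rewrite a2 // sqr_sqrtr ?lemax // ltW.
have aibnd : forall l, (l < L)%N -> ai l ^+ 2 <= smin^-1 ^+ 2.
  move=> l hl; rewrite /ai !exprVn a2 // sqr_sqrtr; last exact: ltW.
  by rewrite lef_pV2 ?posrE ?minle ?lampos.
have scK : forall y : tup R d, sc a (sc ai y) = y.
  by move=> y; apply: tup_ext => l; rewrite /sc scalerA /ai mulfV // scale1r.
have scK' : forall y : tup R d, sc ai (sc a y) = y.
  by move=> y; apply: tup_ext => l; rewrite /sc scalerA /ai mulVf // scale1r.
have sc0 : forall b, sc b (tzero R d) = tzero R d.
  by move=> b; apply: tup_ext => l; rewrite /sc /tzero scaler0.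
have hFG : forall y : tup R d, Gobj Y lam (sc a y) = lP * Fobj Y lam y.
  move=> y; rewrite /Gobj /Fobj prodW_sc.
  have -> : \prod_(l < L) a l = Num.sqrt lP.
    rewrite /lP /lamP -prod_sqrt; last by move=> i hi; apply: ltW; apply: lampos.
    by apply: eq_bigr => i _; rewrite /a ltn_ord.
  rewrite -scalerBr frob2Z sqr_sqrtr ?ltW // mulrDr; congr (_ + _).
  congr (_ * _); apply: eq_bigr => i _; rewrite /sc frob2Z a2 //.
have hGF : forall y : tup R d, Fobj Y lam (sc ai y) = lP^-1 * Gobj Y lam y.
  by move=> y; rewrite -{2}(scK y) hFG mulKf // lt0r_neq0.
have critFG : forall V, crit L (Fobj Y lam) V -> crit L (Gobj Y lam) (sc a V).
  move=> V hV; have := @grad_sc R L d _ _ a lP smin^-1 V (tzero R d) an0 lP0 _ _ hFG hV.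
  by rewrite sc0; apply; rewrite ?invr_gt0.
have critGF : forall U, crit L (Gobj Y lam) U -> crit L (Fobj Y lam) (sc ai U).
  move=> U hU.
  have := @grad_sc R L d _ _ ai lP^-1 smax U (tzero R d) ain0 _ smax0 _ hGF hU.
  rewrite sc0; apply; first by rewrite invr_gt0.
  by move=> l hl; rewrite /ai invrK; apply: abnd.
set Z := sc a W.
have dZ : tdist L Z (crit L (Gobj Y lam)) <= smax * tdist L W (crit L (Fobj Y lam)).
  apply: (@dist_sc R L d _ _ a smax W smax0 abnd critFG) => U hU.
  by exists (sc ai U); apply: critGF.
have dZe : tdist L Z (crit L (Gobj Y lam)) <= eps.
  apply: le_trans dZ _; rewrite -ler_pdivlMl // mulrC; exact: hW.
have si0 : 0 < smin^-1 by rewrite invr_gt0.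
have gG := @grad_sc R L d _ _ a lP smin^-1 W g an0 lP0 si0 aibnd hFG hg.
have hZ := hG Z dZe _ gG.
have ng : tnorm L (sc (fun l => lP * (a l)^-1) g) <= lP * smin^-1 * tnorm L g.
  apply: tnorm_sc_le; first by apply: mulr_ge0; apply: ltW.
  by move=> l hl; rewrite !exprMn; apply: ler_wpM2l; [exact: sqr_ge0| exact: aibnd].
have dW : tdist L W (crit L (Fobj Y lam)) <= smin^-1 * tdist L Z (crit L (Gobj Y lam)).
  rewrite -{1}(scK' W).
  apply: (@dist_sc R L d _ _ ai smin^-1 Z si0 aibnd critGF) => V hV.
  by exists (sc a V); apply: critFG.
apply: (le_trans dW); apply: (le_trans (ler_wpM2l (ltW si0) hZ)).
apply: (le_trans (ler_wpM2l (ltW si0) (ler_wpM2l (ltW kap0) ng))).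
have -> : lmin = smin ^+ 2 by rewrite sqr_sqrtr // ltW.
rewrite le_eqVlt; apply/orP; left; apply/eqP.
by field; apply: lt0r_neq0.
Qed.
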